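(* Let $(\Gamma,M)$ be an E-GCM graph with Coxeter group $W$, and let $J\subseteq I_n$ be such that the parabolic subgroup $W_J$ is finite. Let $s_{i_p}\cdots s_{i_2}s_{i_1}$ be any reduced expression for an element of $W^J$, and let $\lambda\in C_J$. Then for each $1\le q\le p$, $(\gamma_{i_1},\dots,\gamma_{i_q})$ is a legal sequence of node firings in a numbers game played from the initial position $\lambda$ (i.e. for each $q$, the population at $\gamma_{i_q}$ is positive after firing $\gamma_{i_1},\dots,\gamma_{i_{q-1}}$ in order).
   Context: E-GCM $M=(M_{ij})_{i,j\in I_n}$: real, $M_{ii}=2$, $M_{ij}\le0$ ($i\ne j$), $M_{ij}\ne0\iff M_{ji}\ne0$, nonzero $M_{ij}M_{ji}$ either $\ge4$ or $=4\cos^2(\pi/m)$ with $m\ge3$ integer; E-GCM graph with nodes $\gamma_i$, adjacent iff $M_{ij}\ne0$. Positions $\lambda=(\lambda_i)\in\mathbb{R}^n$; firing $\gamma_i$ is allowed iff $\lambda_i>0$ and replaces each $\lambda_j$ by $\lambda_j-M_{ij}\lambda_i$. $W$: Coxeter group with generators $s_i$, $s_i^2=e$, $(s_is_j)^{m_{ij}}=e$, $m_{ij}=k$ if $M_{ij}M_{ji}=4\cos^2(\pi/k)$ ($k\ge2$), $m_{ij}=\infty$ if $M_{ij}M_{ji}\ge4$; $\ell$ = length. For $J\subseteq I_n$, $W_J$ is the subgroup generated by $\{s_j\}_{j\in J}$ and $W^J=\{w\in W:\ell(ws_j)>\ell(w)\ \forall j\in J\}$. $C_J$ is the set of positions $\lambda$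 with $\lambda_j=0$ for $j\in J$ and $\lambda_i>0$ for $i\notin J$. *)

(* Defs.v *)
From mathcomp Require Import all_boot.
From Stdlib Require Import Reals.
Set Implicit Arguments.
Unset Strict Implicit.
Unset Printing Implicit Defensive.

Definition is_EGCM (n : nat) (M : 'I_n -> 'I_n -> R) : Prop :=
  (forall i, M i i = 2%R) /\
  (forall i j, i != j -> (M i j <= 0)%R) /\
  (forall i j, M i j <> 0%R <-> M j i <> 0%R) /\
  (forall i j, i != j -> M i j <> 0%R ->
     (4 <= M i j * M j i)%R \/
     (exists m : nat, leq 3 m /\ M i j * M j i = 4 * (cos (PI / INR m)) ^ 2)%R).

(* Defining relators of the Coxeter group W: words r with r = e in W.
   s_i^2 = e, and (s_i s_j)^k = e when i <> j and M_ij M_ji = 4 cos^2(pi/k), k >= 2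
   (i.e. m_ij = k); no relator when M_ij M_ji >= 4 (m_ij = infinity). *)
Definition cox_relator (n : nat) (M : 'I_n -> 'I_n -> R) (r : seq 'I_n) : Prop :=
  (exists i, r = [:: i; i]) \/
  (exists i j (k : nat), i != j /\ 2 <= k /\
     (M i j * M j i = 4 * (cos (PI / INR k)) ^ 2)%R /\
     r = flatten (nseq k [:: i; j])).

(* Words w = [:: a1; ...; ak] represent s_a1 s_a2 ... s_ak in W.
   coxeq M u v : u and v represent the same element of W
   (congruence generated by the relators). *)
Inductive coxeq (n : nat) (M : 'I_n -> 'I_n -> R) : seq 'I_n -> seq 'I_n -> Prop :=
| coxeq_refl w : coxeq M w w
| coxeq_sym u v : coxeq M u v -> coxeq M v u
| coxeq_trans u v w : coxeq M u v -> coxeq M v w -> coxeq M u w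
| coxeq_rel u r v : cox_relator M r -> coxeq M (u ++ r ++ v) (u ++ v).

Definition cox_length (n : nat) (M : 'I_n -> 'I_n -> R) (w : seq 'I_n) (k : nat) : Prop :=
  (exists v, coxeq M v w /\ size v = k) /\ (forall v, coxeq M v w -> k <= size v).

Definition reduced (n : nat) (M : 'I_n -> 'I_n -> R) (w : seq 'I_n) : Prop :=
  forall v, coxeq M v w -> size w <= size v.

Definition parabolic_finite (n : nat) (M : 'I_n -> 'I_n -> R) (J : {set 'I_n}) : Prop :=
  exists L : seq (seq 'I_n),
    forall w : seq 'I_n, all (fun a => a \in J) w -> exists2 v, v \in L & coxeq M w v.

Definition in_min_coset_reps (n : nat) (M : 'I_n -> 'I_n -> R) (J : {set 'I_n})
  (w : seq 'I_n) : Prop :=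
  forall j, j \in J -> forall a b, cox_length M (rcons w j) a -> cox_length M w b -> b < a.

Definition in_CJ (n : nat) (J : {set 'I_n}) (lam : 'I_n -> R) : Prop :=
  (forall j, j \in J -> lam j = 0%R) /\ (forall i, i \notin J -> (0 < lam i)%R).

Definition fire (n : nat) (M : 'I_n -> 'I_n -> R) (i : 'I_n) (lam : 'I_n -> R) : 'I_n -> R :=
  fun j => (lam j - M i j * lam i)%R.

Fixpoint legal_seq (n : nat) (M : 'I_n -> 'I_n -> R) (lam : 'I_n -> R) (s : seq 'I_n) : Prop :=
  match s with
  | [::] => True
  | i :: s' => (0 < lam i)%R /\ legal_seq M (fire M i lam) s'
  end.

(* Main.v *)
Require Import Defs.
From HB Require Import structures.
From mathcomp Require Import all_boot.
From Stdlib Require Import Reals Lra Lia Psatz FunctionalExtensionality Classical.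
From mathcomp Require Import zify.
Set Implicit Arguments.
Unset Strict Implicit.
Unset Printing Implicit Defensive.

HB.instance Definition _ := Monoid.isComLaw.Build R R0 Rplus (fun a b c => esym (Rplus_assoc a b c)) Rplus_comm Rplus_0_l.
Open Scope R_scope.



Lemma rsum_split n (F G : 'I_n -> R) :
  \big[Rplus/R0]_(i < n) (F i + G i) = \big[Rplus/R0]_(i < n) F i + \big[Rplus/R0]_(i < n) G i.
Proof. exact: big_split. Qed.
Lemma rsum_scal n (c : R) (F : 'I_n -> R) :
  c * (\big[Rplus/R0]_(i < n) F i) = \big[Rplus/R0]_(i < n) (c * F i).
Proof. apply: (big_morph (fun x => c * x)); [move=> x y; ring | ring]. Qed.
Lemma rsum_ext n (F G : 'I_n -> R) : (forall i, F i = G i) ->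
  \big[Rplus/R0]_(i < n) F i = \big[Rplus/R0]_(i < n) G i.
Proof. by move=> h; apply: eq_bigr => i _. Qed.
Lemma rsum_ge0 n (F : 'I_n -> R) : (forall i, 0 <= F i) -> 0 <= \big[Rplus/R0]_(i < n) F i.
Proof. move=> h; apply: (big_ind (fun x => 0 <= x)) => //; [lra| move=> x y; lra]. Qed.
Lemma rsum_delta n (F : 'I_n -> R) (t : 'I_n) :
  \big[Rplus/R0]_(i < n) (F i * (if i == t then 1 else 0)) = F t.
Proof.
rewrite (bigD1 t) //= eqxx big1 /=; first ring.
by move=> i /negbTE ->; ring.
Qed.
Lemma rsum_delta' n (F : 'I_n -> R) (t : 'I_n) :
  \big[Rplus/R0]_(i < n) (F i * (if t == i then 1 else 0)) = F t.
Proof. rewrite -(rsum_delta F t); apply: rsum_ext => i; by rewrite eq_sym. Qed.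
Lemma rsum_term0 n (F : 'I_n -> R) : (forall i, 0 <= F i) ->
  \big[Rplus/R0]_(i < n) F i <= 0 -> forall i, F i = 0.
Proof.
move=> h hs i; move: hs; rewrite (bigD1 i) //= => hs.
apply: Rle_antisym; last exact: h.
eapply Rle_trans; last exact: hs.
rewrite -{1}(Rplus_0_r (F i)); apply: Rplus_le_compat_l.
by apply: (big_ind (fun x => 0 <= x)) => //; [lra| move=> x y; lra].
Qed.

Definition ev n (t : 'I_n) : 'I_n -> R := fun l => if l == t then 1 else 0.
Definition fl n (M : 'I_n -> 'I_n -> R) (t : 'I_n) (v : 'I_n -> R) : R :=
  \big[Rplus/R0]_(l < n) (M t l * v l).
Definition sg n (M : 'I_n -> 'I_n -> R) (t : 'I_n) (v : 'I_n -> R) : 'I_n -> R :=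
  fun l => v l - fl M t v * ev t l.
Fixpoint sgw n (M : 'I_n -> 'I_n -> R) (w : seq 'I_n) (v : 'I_n -> R) : 'I_n -> R :=
  match w with [::] => v | t :: w' => sg M t (sgw M w' v) end.

Lemma fl_lin n (M : 'I_n -> 'I_n -> R) t (x y : R) (u v : 'I_n -> R) :
  fl M t (fun l => x * u l + y * v l) = x * fl M t u + y * fl M t v.
Proof.
rewrite /fl (rsum_ext (G := fun l => x * (M t l * u l) + y * (M t l * v l))).
  by rewrite rsum_split -!rsum_scal.
by move=> i; ring.
Qed.
Lemma fl_ev n (M : 'I_n -> 'I_n -> R) t u : fl M t (ev u) = M t u.
Proof. exact: rsum_delta. Qed.
Lemma fl_ev2 n (M : 'I_n -> 'I_n -> R) t u u' (p q : R) :
  fl M t (fun l => p * ev u l + q * ev u' l) = p * M t u + q * M t u'.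
Proof. by rewrite fl_lin !fl_ev. Qed.

Lemma sg_lin n (M : 'I_n -> 'I_n -> R) t (x y : R) (u v : 'I_n -> R) :
  sg M t (fun l => x * u l + y * v l) = fun l => x * sg M t u l + y * sg M t v l.
Proof. apply: functional_extensionality => l; rewrite /sg fl_lin; ring. Qed.
Lemma sgw_lin n (M : 'I_n -> 'I_n -> R) w (x y : R) (u v : 'I_n -> R) :
  sgw M w (fun l => x * u l + y * v l) = fun l => x * sgw M w u l + y * sgw M w v l.
Proof. elim: w => [//|t w IH] /=; by rewrite IH sg_lin. Qed.
Lemma sgw_cat n (M : 'I_n -> 'I_n -> R) u w v : sgw M (u ++ w) v = sgw M u (sgw M w v).
Proof. by elim: u => [//|t u IH] /=; rewrite IH. Qed.
Lemma fl_sg n (M : 'I_n -> 'I_n -> R) u t v : fl M u (sg M t v) = fl M u v - fl M t v * M u t.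
Proof.
have -> : sg M t v = fun l => 1 * v l + (- fl M t v) * ev t l.
  by apply: functional_extensionality => l; rewrite /sg; ring.
rewrite fl_lin fl_ev; ring.
Qed.
Lemma sg_invol n (M : 'I_n -> 'I_n -> R) t v : M t t = 2 -> sg M t (sg M t v) = v.
Proof.
move=> h; apply: functional_extensionality => l.
rewrite {1}/sg fl_sg h /sg; ring.
Qed.
Lemma sgw_rev_cancel n (M : 'I_n -> 'I_n -> R) w v : (forall t, M t t = 2) ->
  sgw M (rev w) (sgw M w v) = v.
Proof.
move=> h; elim: w v => [//|t w IH] v /=.
by rewrite rev_cons -cats1 sgw_cat /= sg_invol.
Qed.
Lemma sg_ev n (M : 'I_n -> 'I_n -> R) t : M t t = 2 -> sg M t (ev t) = fun l => - ev t l.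
Proof. move=> h; apply: functional_extensionality => l; rewrite /sg fl_ev h; ring. Qed.

Lemma sgw_matrix n (M : 'I_n -> 'I_n -> R) w v :
  sgw M w v = fun l' => \big[Rplus/R0]_(l < n) (v l * sgw M w (ev l) l').
Proof.
elim: w v => [|t w IH] v /=.
  apply: functional_extensionality => l'; rewrite /ev.
  by rewrite rsum_delta'.
apply: functional_extensionality => l'.
rewrite IH {1}/sg.
have -> : fl M t (fun l'0 => \big[Rplus/R0]_(l < n) (v l * sgw M w (ev l) l'0)) =
          \big[Rplus/R0]_(l < n) (v l * fl M t (sgw M w (ev l))).
  rewrite /fl (rsum_ext (G := fun m => \big[Rplus/R0]_(l < n) (M t m * (v l * sgw M w (ev l) m)))).
    rewrite exchange_big /=; apply: rsum_ext => l; rewrite rsum_scal; apply: rsum_ext => m; ring.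
  by move=> m; rewrite rsum_scal.
rewrite /sg; symmetry.
rewrite (rsum_ext (F := fun l => v l * (sgw M w (ev l) l' - fl M t (sgw M w (ev l)) * ev t l')) (G := fun l => v l * sgw M w (ev l) l' + (- ev t l') * (v l * fl M t (sgw M w (ev l))))).
  rewrite rsum_split -rsum_scal; ring.
by move=> l; ring.
Qed.

Definition firesq n (M : 'I_n -> 'I_n -> R) (lam : 'I_n -> R) (t : seq 'I_n) :=
  foldl (fun l i => fire M i l) lam t.

Lemma duality n (M : 'I_n -> 'I_n -> R) t lam u :
  firesq M lam t u = \big[Rplus/R0]_(l < n) (lam l * sgw M t (ev u) l).
Proof.
elim: t lam => [|i t IH] lam /=.
  by rewrite /firesq /= /ev rsum_delta.
rewrite /firesq /= -/(firesq M (fire M i lam) t) IH /sg /fire /fl.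
rewrite (rsum_ext (F := fun l => (lam l - M i l * lam i) * sgw M t (ev u) l)
   (G := fun l => lam l * sgw M t (ev u) l + (- lam i) * (M i l * sgw M t (ev u) l))).
  2: by move=> l; ring.
rewrite (rsum_ext (F := fun l => lam l * (sgw M t (ev u) l - \big[Rplus/R0]_(l0 < n) (M i l0 * sgw M t (ev u) l0) * ev i l))
   (G := fun l => lam l * sgw M t (ev u) l + (- \big[Rplus/R0]_(l0 < n) (M i l0 * sgw M t (ev u) l0)) * (lam l * ev i l))).
  2: by move=> l; ring.
rewrite !rsum_split -!rsum_scal /ev rsum_delta; ring.
Qed.



Lemma cx_cat3 n (M : 'I_n -> 'I_n -> R) x u v y :
  coxeq M u v -> coxeq M (x ++ u ++ y) (x ++ v ++ y).
Proof.
elim=> {u v} [w|u v _ IH|u v w _ IH1 _ IH2|u r v hr].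
- exact: coxeq_refl.
- exact: coxeq_sym.
- exact: coxeq_trans IH2.
- have := @coxeq_rel _ M (x ++ u) r (v ++ y) hr; by rewrite -!catA.
Qed.
Lemma cx_catl n (M : 'I_n -> 'I_n -> R) x u v : coxeq M u v -> coxeq M (x ++ u) (x ++ v).
Proof. move=> h; have := cx_cat3 x [::] h; by rewrite !cats0. Qed.
Lemma cx_catr n (M : 'I_n -> 'I_n -> R) y u v : coxeq M u v -> coxeq M (u ++ y) (v ++ y).
Proof. move=> h; exact: (cx_cat3 [::] y h). Qed.
Lemma cx_cat n (M : 'I_n -> 'I_n -> R) u u' v v' :
  coxeq M u u' -> coxeq M v v' -> coxeq M (u ++ v) (u' ++ v').
Proof. move=> h1 h2; apply: coxeq_trans (cx_catr _ h1) (cx_catl _ h2). Qed.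
Lemma cx_tt n (M : 'I_n -> 'I_n -> R) x t y : coxeq M (x ++ [:: t; t] ++ y) (x ++ y).
Proof. apply: coxeq_rel; left; by exists t. Qed.

Lemma size_flat_nseq (T : Type) k (x : seq T) : (size (flatten (nseq k x)) = k * size x)%nat.
Proof. elim: k => [//|k IH] /=; by rewrite size_cat IH mulSn. Qed.

Lemma cx_odd n (M : 'I_n -> 'I_n -> R) u v : coxeq M u v -> odd (size u) = odd (size v).
Proof.
elim=> {u v} [//|u v _ ->//|u v w _ -> _ ->//|u r v hr].
rewrite !size_cat !oddD.
have -> : odd (size r) = false.
  case: hr => [[i ->]//|[i [j [k [_ [_ [_ ->]]]]]]].
  by rewrite size_flat_nseq /= muln2 odd_double.
by [].
Qed.

Lemma flat_nseq_comm (T : Type) k (x : seq T) : flatten (nseq k x) ++ x = x ++ flatten (nseq k x).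
Proof. elim: k => [|k IH] /=; first by rewrite cats0. by rewrite -catA IH. Qed.
Lemma rev_flat_nseq (T : Type) k (i j : T) :
  rev (flatten (nseq k [:: i; j])) = flatten (nseq k [:: j; i]).
Proof.
elim: k => [//|k IH] /=.
rewrite -cat1s -(cat1s j) catA rev_cat IH /=. exact: (flat_nseq_comm k [:: j; i]).
Qed.

Lemma cx_rev n (M : 'I_n -> 'I_n -> R) u v : coxeq M u v -> coxeq M (rev u) (rev v).
Proof.
elim=> {u v} [w|u v _ IH|u v w _ IH1 _ IH2|u r v hr].
- exact: coxeq_refl.
- exact: coxeq_sym.
- exact: coxeq_trans IH2.
- rewrite !rev_cat -catA; apply: coxeq_rel.
  case: hr => [[i ->]|[i [j [k [hij [hk [hm ->]]]]]]].
    by left; exists i.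
  right; exists j, i, k; split; first by rewrite eq_sym.
  split=> //; split; first by rewrite Rmult_comm.
  exact: rev_flat_nseq.
Qed.

Lemma cx_cancel n (M : 'I_n -> 'I_n -> R) w : coxeq M (w ++ rev w) [::].
Proof.
elim: w => [|t w IH] /=; first exact: coxeq_refl.
rewrite rev_cons -cats1.
apply: (@coxeq_trans _ M _ ([::] ++ [:: t; t] ++ [::])); last exact: cx_tt.
rewrite /= -cat1s -(cat1s t [:: t]); apply: cx_catl.
rewrite catA; exact: (cx_catr [:: t] IH).
Qed.

Fixpoint alt n (t u : 'I_n) (m : nat) : seq 'I_n :=
  match m with 0 => [::] | m'.+1 => rcons (alt u t m') t end.

Lemma size_alt n (t u : 'I_n) m : size (alt t u m) = m.
Proof. elim: m t u => [//|m IH] t u /=; by rewrite size_rcons IH. Qed.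

Lemma alt_cons n (t u : 'I_n) m : alt t u m.+1 = (if odd m then u else t) :: alt t u m.
Proof.
elim: m t u => [//|m IH] t u.
rewrite /= -/(alt u t m.+1) IH /=.
by case: (odd m).
Qed.

Lemma alt_add n (t u : 'I_n) j k :
  alt t u (j + k) = alt (if odd k then u else t) (if odd k then t else u) j ++ alt t u k.
Proof.
elim: k t u => [|k IH] t u; first by rewrite addn0 cats0.
rewrite addnS /= IH rcons_cat.
by case: (odd k).
Qed.

Lemma alt_suffix n (t u : 'I_n) m k : (k <= m)%nat -> exists y, alt t u m = y ++ alt t u k.
Proof.
move=> h; exists (alt (if odd k then u else t) (if odd k then t else u) (m - k)).
by rewrite -alt_add subnK.
Qed.

Lemma rev_alt n (t u : 'I_n) k :
  rev (alt t u k) = alt (if odd k then t else u) (if odd k then u else t) k.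
Proof.
elim: k t u => [//|k IH] t u.
rewrite [in LHS]/= rev_rcons IH alt_cons /=.
by case: (odd k).
Qed.

Lemma flat_alt n (i j : 'I_n) k : flatten (nseq k [:: i; j]) = alt j i (k + k).
Proof.
elim: k => [//|k IH].
rewrite addSn addnS !alt_cons /= -IH.
have -> : odd (k + k) = false by rewrite oddD addbb.
done.
Qed.

Lemma braid_words n (M : 'I_n -> 'I_n -> R) (i j : 'I_n) k :
  cox_relator M (flatten (nseq k [:: i; j])) -> coxeq M (alt i j k) (alt j i k).
Proof.
move=> hr.
have h0 : coxeq M (flatten (nseq k [:: i; j])) [::].
  have := @coxeq_rel _ M [::] _ [::] hr; by rewrite /= cats0.
rewrite flat_alt alt_add in h0.
set A := alt _ _ k in h0; set B := alt j i k in h0.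
have hA : coxeq M A (rev B).
  apply: coxeq_trans (_ : coxeq M ((A ++ B) ++ rev B) _).
    rewrite -catA; apply: coxeq_sym.
    have := cx_catl A (cx_cancel M B); by rewrite cats0.
  have := cx_catr (rev B) h0; by [].
rewrite /B rev_alt /A in hA.
case: (odd k) hA => hA //.
exact: coxeq_sym.
Qed.



Fixpoint coef (a b : R) (m : nat) : R * R :=
  match m with
  | 0 => (1, 0)
  | m'.+1 => let pq := coef a b m' in
      if odd m' then (a * pq.2 - pq.1, pq.2) else (pq.1, b * pq.1 - pq.2)
  end.
Lemma coefS a b m : coef a b m.+1 =
  if odd m then (a * (coef a b m).2 - (coef a b m).1, (coef a b m).2)
  else ((coef a b m).1, b * (coef a b m).1 - (coef a b m).2).
Proof. by []. Qed.

Fixpoint U (c : R) (j : nat) : R :=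
  match j with 0 => 0 | 1 => 1 | (j'.+1 as j1).+1 => c * U c j1 - U c j' end.
Lemma US c j : U c j.+2 = c * U c j.+1 - U c j.
Proof. by []. Qed.

Lemma sgw_alt_coef n (M : 'I_n -> 'I_n -> R) (s s' : 'I_n) m :
  M s s = 2 -> M s' s' = 2 ->
  sgw M (alt s' s m) (ev s) = fun l => (coef (- M s s') (- M s' s) m).1 * ev s l
                                    + (coef (- M s s') (- M s' s) m).2 * ev s' l.
Proof.
move=> h1 h2; elim: m => [|m IH].
  by apply: functional_extensionality => l /=; ring.
rewrite alt_cons coefS /= IH.
case: (coef _ _ m) => p q /=.
case: (odd m); apply: functional_extensionality => l;
  rewrite /sg fl_ev2 ?h1 ?h2 /=; ring.
Qed.

Lemma odd_tt t : odd (t + t) = false.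
Proof. by rewrite oddD addbb. Qed.

Lemma coef_closed a b c : c <> 0 -> c * c = a * b -> forall t,
  coef a b (t + t) = (U c (t + t).+1, b / c * U c (t + t)) /\
  coef a b (t + t).+1 = (U c (t + t).+1, b / c * U c (t + t).+2).
Proof.
move=> hc hab.
have e : a * (b / c) = c.
  rewrite /Rdiv -Rmult_assoc -hab; field; exact: hc.
elim=> [|t [IH1 IH2]].
  split; rewrite /=; f_equal; field; exact: hc.
rewrite addSn addnS.
have G1 : coef a b (t + t).+2 = (U c (t + t).+3, b / c * U c (t + t).+2).
  rewrite coefS IH2 oddS odd_tt; cbn [fst snd negb]; rewrite (US c (t + t).+1).
  f_equal; transitivity (a * (b / c) * U c (t + t).+2 - U c (t + t).+1); first ring.
  by rewrite e.
split=> //.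
rewrite coefS G1 oddS oddS odd_tt; cbn [fst snd negb]; rewrite (US c (t + t).+2).
f_equal; field; exact: hc.
Qed.

Lemma INR_le (j k : nat) : (j <= k)%nat -> INR j <= INR k.
Proof. move=> h; apply: le_INR; exact/leP. Qed.
Lemma INR2 : INR 2 = 2.
Proof. simpl; ring. Qed.
Lemma INR3 : INR 3 = 3.
Proof. simpl; ring. Qed.

Lemma theta_facts (k : nat) : (2 <= k)%nat ->
  0 < sin (PI / INR k) /\ INR k * (PI / INR k) = PI /\ 0 < PI / INR k.
Proof.
move=> hk; have hk2 := INR_le hk; rewrite INR2 in hk2.
have hpi := PI_RGT_0.
have h0 : 0 < PI / INR k by apply: Rdiv_lt_0_compat; lra.
split; last split => //.
- apply: sin_gt_0 => //.
  apply: (Rmult_lt_reg_r (INR k)); first lra.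
  rewrite /Rdiv Rmult_assoc Rinv_l; nra.
- field; lra.
Qed.

Lemma cos_theta_pos (k : nat) : (3 <= k)%nat -> 0 < cos (PI / INR k).
Proof.
move=> hk; have hk3 := INR_le hk; rewrite INR3 in hk3.
have hpi := PI_RGT_0.
apply: cos_gt_0.
  have : 0 < PI / INR k by apply: Rdiv_lt_0_compat; lra.
  have : 0 < PI / 2 by lra.
  lra.
apply: (Rmult_lt_reg_r (INR k)); first lra.
rewrite /Rdiv Rmult_assoc Rinv_l; nra.
Qed.

Lemma U_sin th : sin th <> 0 -> forall j, U (2 * cos th) j = sin (INR j * th) / sin th.
Proof.
move=> hs.
suff H : forall j, U (2 * cos th) j = sin (INR j * th) / sin th /\
                   U (2 * cos th) j.+1 = sin (INR j.+1 * th) / sin th by move=> j; case: (H j).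
elim=> [|j [IH1 IH2]].
  split; rewrite /=.
    rewrite Rmult_0_l sin_0; field; exact: hs.
  rewrite Rmult_1_l; field; exact: hs.
split=> //.
rewrite US IH1 IH2.
have e1 : INR j.+2 * th = INR j.+1 * th + th by rewrite (S_INR j.+1); ring.
have e2 : INR j * th = INR j.+1 * th - th by rewrite (S_INR j); ring.
rewrite e1 e2 sin_plus sin_minus; field; exact: hs.
Qed.

Lemma U_nonneg_fin (k j : nat) : (2 <= k)%nat -> (j <= k)%nat ->
  0 <= U (2 * cos (PI / INR k)) j.
Proof.
move=> hk hj; have [hs [hkt hth]] := theta_facts hk.
rewrite U_sin; last lra.
apply: Rmult_le_pos; last by left; apply: Rinv_0_lt_compat.
apply: sin_ge_0.
  apply: Rmult_le_pos => //; [exact: pos_INR | lra].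
rewrite -{2}hkt; apply: Rmult_le_compat_r; [lra | exact: INR_le].
Qed.

Lemma U_nonneg_inf c : 2 <= c -> forall j, 0 <= U c j.
Proof.
move=> hc.
suff H : forall j, 0 <= U c j <= U c j.+1 by move=> j; case: (H j).
elim=> [|j [IH1 IH2]]; first by simpl; lra.
split; first lra.
rewrite US; nra.
Qed.



Lemma coef_nonneg_U a b c m : 0 < c -> c * c = a * b -> 0 <= b ->
  (forall j, (j <= m.+1)%nat -> 0 <= U c j) ->
  0 <= (coef a b m).1 /\ 0 <= (coef a b m).2.
Proof.
move=> hc hab hb hU.
have hbc : 0 <= b / c by apply: Rmult_le_pos => //; left; apply: Rinv_0_lt_compat.
have hm := odd_double_half m; rewrite -addnn in hm.
move: hm; move: (m./2) => t; case: (odd m) => hm; rewrite /= ?add1n ?add0n in hm; subst m.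
- rewrite (proj2 (coef_closed (Rgt_not_eq _ _ hc) hab t)); cbn [fst snd].
  split; first by apply: hU; exact: leqnSn.
  apply: Rmult_le_pos => //; apply: hU; exact: leqnn.
- rewrite (proj1 (coef_closed (Rgt_not_eq _ _ hc) hab t)); cbn [fst snd].
  split; first by apply: hU; exact: leqnn.
  apply: Rmult_le_pos => //; apply: hU; exact: leqnSn.
Qed.

Lemma coef_nonneg a b m : 0 <= a -> 0 <= b ->
  ((exists k, (2 <= k)%nat /\ a * b = 4 * cos (PI / INR k) ^ 2 /\ (m < k)%nat) \/ 4 <= a * b) ->
  0 <= (coef a b m).1 /\ 0 <= (coef a b m).2.
Proof.
move=> ha hb H.
case: m H => [|[|m]] H.
- simpl; lra.
- simpl; split; lra.
- case: H => [[k [hk [hab hm]]]|hab].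
  + have hk3 : (3 <= k)%nat by apply: leq_trans _ hm.
    apply: (coef_nonneg_U (c := 2 * cos (PI / INR k))) => //.
    * have := cos_theta_pos hk3; lra.
    * rewrite hab; ring.
    * move=> j hj; apply: U_nonneg_fin => //; exact: leq_trans hj hm.
  + apply: (coef_nonneg_U (c := sqrt (a*b))) => //.
    * apply: sqrt_lt_R0; lra.
    * apply: sqrt_sqrt; lra.
    * move=> j _; apply: U_nonneg_inf.
      have := sqrt_sqrt (a*b); have := sqrt_pos (a*b); move=> h1 h2; nra.
Qed.

Lemma egcm_ab n (M : 'I_n -> 'I_n -> R) i j : is_EGCM M -> i != j ->
  0 <= - M i j /\ 0 <= - M j i /\ (M i j * M j i = 0 -> M i j = 0 /\ M j i = 0).
Proof.
case=> [hd [hneg [hiff _]]] hij.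
have h1 := hneg i j hij.
have h2 : M j i <= 0 by apply: hneg; rewrite eq_sym.
split; first lra; split; first lra.
move=> h0; case: (Rmult_integral _ _ h0) => hz.
  split=> //; case: (Req_dec (M j i) 0) => // hnz.
  by case: ((proj2 (hiff i j)) hnz).
split=> //; case: (Req_dec (M i j) 0) => // hnz.
by case: ((proj1 (hiff i j)) hnz).
Qed.

Lemma pair_case n (M : 'I_n -> 'I_n -> R) i j : is_EGCM M -> i != j ->
  (exists k, (2 <= k)%nat /\ M i j * M j i = 4 * cos (PI / INR k) ^ 2) \/ 4 <= M i j * M j i.
Proof.
move=> eg hij; have [_ [_ hz]] := egcm_ab eg hij.
case: eg => [_ [_ [hiff hcase]]].
case: (Req_dec (M i j) 0) => h0.
  left; exists 2%nat; split=> //.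
  by rewrite h0 INR2 cos_PI2; ring.
case: (hcase i j hij h0) => [h|[m [hm e]]]; first by right.
left; exists m; split=> //; exact: leq_trans _ hm.
Qed.

Lemma sg_fix n (M : 'I_n -> 'I_n -> R) t v : fl M t v = 0 -> sg M t v = v.
Proof. move=> h; apply: functional_extensionality => l; rewrite /sg h; ring. Qed.

Lemma sgw_relator n (M : 'I_n -> 'I_n -> R) r : is_EGCM M -> cox_relator M r ->
  forall v, sgw M r v = v.
Proof.
move=> eg; have hd : forall t, M t t = 2 by case: eg.
case=> [[i ->]|[i [j [k [hij [hk [hm ->]]]]]]] v.
  by rewrite /= sg_invol.
have [ha [hb hz]] := egcm_ab eg hij.
set a := - M i j; set b := - M j i.
have hab : a * b = 4 * cos (PI / INR k) ^ 2 by rewrite /a /b -hm; ring.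
have [hk1 hk2] : (k + k = (k.-1 + k.-1).+2)%nat /\ (0 < k)%nat.
  by case: k hk {hm hab} => [|k'] //= _; rewrite addSn addnS.
have [Ci Cj] : coef a b (k + k) = (1, 0) /\ coef b a (k.-1 + k.-1).+1 = (-1, 0).
  move: hk; rewrite leq_eqVlt => /orP [/eqP ek|hk3].
    subst k.
    move: hab; rewrite INR2 cos_PI2 => hab.
    have [e1 e2] : M i j = 0 /\ M j i = 0 by apply: hz; rewrite hm INR2 cos_PI2; ring.
    rewrite /a /b e1 e2 /=; split; f_equal; ring.
  have [hs [hkt hth]] := theta_facts (ltnW hk3).
  have hc := cos_theta_pos hk3.
  set th := PI / INR k in hs hkt hth hc hab.
  have hc0 : 2 * cos th <> 0 by lra.
  have hU := U_sin (Rgt_not_eq _ _ hs).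
  have hcc : (2 * cos th) * (2 * cos th) = a * b by rewrite hab; ring.
  have hcc' : (2 * cos th) * (2 * cos th) = b * a by rewrite hcc; ring.
  split.
    rewrite (proj1 (coef_closed hc0 hcc k)).
    rewrite !hU.
    have -> : INR (k + k).+1 * th = th + PI + PI by rewrite S_INR plus_INR -hkt; ring.
    have -> : INR (k + k) * th = 0 + PI + PI by rewrite plus_INR -hkt; ring.
    rewrite !neg_sin sin_0; f_equal; field; lra.
  rewrite (proj2 (coef_closed hc0 hcc' k.-1)).
  rewrite !hU.
  have ek : INR k = INR k.-1 + 1 by rewrite -S_INR prednK.
  have -> : INR (k.-1 + k.-1).+1 * th = - th + PI + PI by rewrite -hkt ek S_INR plus_INR; ring.
  have -> : INR (k.-1 + k.-1).+2 * th = 0 + PI + PI by rewrite -hkt ek !S_INR plus_INR; ring.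
  rewrite !neg_sin sin_0 sin_neg; f_equal; field; lra.
have hi : sgw M (flatten (nseq k [:: i; j])) (ev i) = ev i.
  rewrite flat_alt sgw_alt_coef ?hd // -/a -/b Ci /=.
  apply: functional_extensionality => l; ring.
have hj : sgw M (flatten (nseq k [:: i; j])) (ev j) = ev j.
  rewrite flat_alt hk1 -[alt j i _]/(rcons (alt i j (k.-1 + k.-1).+1) j) -cats1 sgw_cat.
  rewrite [sgw M [:: j] _]/= sg_ev ?hd //.
  have -> : (fun l => - ev j l) = (fun l => (-1) * ev j l + 0 * ev j l).
    by apply: functional_extensionality => l; ring.
  rewrite sgw_lin sgw_alt_coef ?hd // -/a -/b Cj /=.
  apply: functional_extensionality => l; ring.
have hD : 0 < 4 - a * b.
  have [hs _] := theta_facts hk.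
  have := sin2_cos2 (PI / INR k); rewrite /Rsqr hab => h; nra.
set X := fl M i v; set Y := fl M j v.
set p := (2 * X + a * Y) / (4 - a * b); set q := (2 * Y + b * X) / (4 - a * b).
set w := fun l => p * ev i l + q * ev j l.
set v0 := fun l => 1 * v l + (-1) * w l.
have hv : v = fun l => 1 * v0 l + 1 * w l.
  by apply: functional_extensionality => l; rewrite /v0; ring.
have f0i : fl M i v0 = 0.
  rewrite /v0 fl_lin /w fl_ev2 hd -/X /p /q /a /b; move: hD; rewrite /a /b => hD; field; lra.
have f0j : fl M j v0 = 0.
  rewrite /v0 fl_lin /w fl_ev2 hd -/Y /p /q /a /b; move: hD; rewrite /a /b => hD; field; lra.
have h0 : forall k', sgw M (flatten (nseq k' [:: i; j])) v0 = v0.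
  elim=> [//|k' IH] /=; by rewrite IH !sg_fix.
rewrite hv sgw_lin h0 /w sgw_lin hi hj.
by apply: functional_extensionality => l; ring.
Qed.

Lemma coxeq_sgw n (M : 'I_n -> 'I_n -> R) u v : is_EGCM M -> coxeq M u v -> sgw M u = sgw M v.
Proof.
move=> eg; elim=> {u v} [//|u v _ ->//|u v w _ -> _ ->//|u r v hr].
apply: functional_extensionality => x.
by rewrite !sgw_cat (sgw_relator eg hr).
Qed.




Lemma ex_min (P : nat -> Prop) : (exists k, P k) -> exists k, P k /\ forall j, P j -> (k <= j)%nat.
Proof.
case=> k0 Pk0.
suff H : forall N k, (k <= N)%nat -> P k -> exists k, P k /\ forall j, P j -> (k <= j)%nat.
  exact: (H k0 k0 (leqnn k0) Pk0).
elim=> [|N IH] k hk Pk.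
  exists k; split => // j0 _; move: hk; rewrite leqn0 => /eqP ->; done.
case: (classic (exists j, (j < k)%nat /\ P j)) => [[j [hj Pj]]|H].
  apply: (IH j) => //; rewrite -ltnS; exact: leq_trans hj hk.
exists k; split => // j Pj; rewrite leqNgt; apply/negP => hjk; apply: H; by exists j.
Qed.

Lemma len_exists n (M : 'I_n -> 'I_n -> R) w : exists k, cox_length M w k.
Proof.
have [k [[v [hv sv]] hmin]] := ex_min (P := fun k => exists v, coxeq M v w /\ size v = k)
  (ex_intro _ (size w) (ex_intro _ w (conj (coxeq_refl M w) erefl))).
exists k; split; first by exists v.
move=> v' hv'; apply: hmin; by exists v'.
Qed.

Lemma cx_rcons n (M : 'I_n -> 'I_n -> R) u v t : coxeq M u v -> coxeq M (rcons u t) (rcons v t).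
Proof. rewrite -!cats1; exact: cx_catr. Qed.
Lemma cx_rcons2 n (M : 'I_n -> 'I_n -> R) u t : coxeq M (rcons (rcons u t) t) u.
Proof. have h := @cx_tt _ M u t [::]; rewrite !cats0 in h; rewrite -!cats1 -catA; exact: h. Qed.

Lemma nodup_path n (a : 'I_n) x :
  (forall x1 x2 t, a :: x <> x1 ++ t :: t :: x2) -> path (fun u v => u != v) a x.
Proof.
elim: x a => [//|b x IH] a h /=.
apply/andP; split.
  apply/negP => /eqP e; subst b; by apply: (h [::] x a).
apply: IH => x1 x2 t e; apply: (h (a :: x1) x2 t); by rewrite e.
Qed.

Lemma alt_char n (s s' : 'I_n) : s != s' -> forall x a,
  path (fun u v => u != v) a x -> all (fun t => (t == s) || (t == s')) (a :: x) ->
  last a x = s' -> a :: x = alt s' s (size x).+1.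
Proof.
move=> hss; elim=> [|b x IH] a hp hall hl.
  by rewrite /= -hl.
move: hp hall => /andP [hab hp] /andP [ha hall].
have IHb := IH b hp hall hl.
have -> : size (b :: x) = (size x).+1 by [].
rewrite {1}IHb.
have hb' : b = (if odd (size x) then s else s').
  by move: IHb; rewrite alt_cons => [[]].
rewrite [RHS]alt_cons oddS; congr cons.
move: hab; rewrite hb'; case: (odd (size x)) => /= hab;
  case/orP: ha => /eqP e //; subst a; by rewrite eqxx in hab.
Qed.

Lemma mainT n (M : 'I_n -> 'I_n -> R) : is_EGCM M ->
  forall L (w : seq 'I_n), cox_length M w L ->
  forall s, (forall v, coxeq M v (rcons w s) -> (L < size v)%nat) ->
  forall l, 0 <= sgw M w (ev s) l.
Proof.
move=> eg; have hd : forall t, M t t = 2 by case: eg.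
elim/ltn_ind => L IH w [[w1 [ew1 sw1]] minw] s long.
rewrite -(coxeq_sgw eg ew1).
case: L IH sw1 minw long => [|L] IH sw1 minw long.
  move/size0nil: sw1 => -> l /=; rewrite /ev; case: (l == s); lra.
case/lastP: w1 ew1 sw1 => [//|w2 s'] ew1 sw1.
rewrite size_rcons in sw1; case: sw1 => sw2.
have hss : s' != s.
  apply/negP => /eqP e; subst s'.
  suff: (L.+1 < size w2)%nat by rewrite sw2 ltnNge leqnSn.
  apply: long.
  apply: coxeq_trans (coxeq_sym (cx_rcons2 M w2 s)) _.
  exact: cx_rcons.
pose P m := exists v x : seq (ordinal n), size v = m /\ all (fun t => (t == s) || (t == s')) x /\
   coxeq M (v ++ x) w /\ (size v + size x <= L.+1)%nat.
have P0 : P (size w2).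
  exists w2, [:: s']; split=> //; split; first by rewrite /= eqxx orbT.
  by rewrite cats1; split=> //; rewrite /= sw2 addn1.
have [m [[v [x [sv [hx [evx svx]]]]] hmin]] := ex_min (ex_intro _ _ P0).
have f1 : (size v + size x = L.+1)%nat.
  apply/eqP; rewrite eqn_leq svx /=; have := minw _ evx; by rewrite size_cat.
have f3 : (m <= L)%nat by have := hmin _ P0; rewrite sw2.
have f4 : cox_length M v m.
  split; first by exists v; split=> //; exact: coxeq_refl.
  move=> v' hv'; have := minw (v' ++ x) (coxeq_trans (cx_catr x hv') evx).
  rewrite size_cat -f1 sv leq_add2r; done.
have f5 : forall t, (t == s) || (t == s') ->
    forall v', coxeq M v' (rcons v t) -> (m < size v')%nat.
  move=> t ht v' hv'; rewrite ltnNge; apply/negP => hle.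
  have hpar := cx_odd hv'; rewrite size_rcons sv /= in hpar.
  have hlt : (size v' < m)%nat.
    rewrite ltn_neqAle hle andbT; apply/eqP => e; rewrite e in hpar.
    by case: (odd m) hpar.
  have : P (size v').
    exists v', (t :: x); split=> //; split; first by rewrite /= ht hx.
    split.
      apply: coxeq_trans (cx_catr (t :: x) hv') _.
      rewrite cat_rcons; exact: coxeq_trans (@cx_tt _ M v t x) evx.
    by rewrite /= addnS -f1 sv ltn_add2r.
  move/hmin; rewrite leqNgt hlt; done.
have hmL : (m < L.+1)%nat by exact: leq_ltn_trans f3 (ltnSn L).
have f6s := IH m hmL v f4 s (f5 s (introT orP (or_introl (eqxx s)))).
have f6s' := IH m hmL v f4 s' (f5 s' (introT orP (or_intror (eqxx s')))).
have hss' : s != s' by rewrite eq_sym.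
have f7 : x <> [::].
  move=> e; subst x; move: f1; rewrite addn0 sv => e'; by rewrite e' ltnn in hmL.
have f8 : forall x1 x2 t, x <> x1 ++ t :: t :: x2.
  move=> x1 x2 t e; subst x.
  have h1 : coxeq M (v ++ x1 ++ x2) w.
    apply: coxeq_trans _ evx.
    have := @cx_tt _ M (v ++ x1) t x2; rewrite -!catA /= => h; exact: coxeq_sym h.
  have := minw _ h1; move: f1; rewrite !size_cat /=; move=> *; lia.
have f9 : forall x1, x <> rcons x1 s.
  move=> x1 e; subst x.
  rewrite -rcons_cat in evx.
  have h1 : coxeq M (v ++ x1) (rcons w s).
    exact: coxeq_trans (coxeq_sym (cx_rcons2 M (v ++ x1) s)) (cx_rcons s evx).
  have := long _ h1; move: f1; rewrite !size_cat size_rcons; move=> *; lia.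
case: x f7 f8 f9 hx evx f1 svx => [//|a x'] _ f8 f9 hx evx f1 svx.
have hp := nodup_path f8.
have hl : last a x' = s'.
  have := mem_last a x'.
  move/allP: hx => hx' /hx' /orP [/eqP e|/eqP e] //.
  exfalso; apply: (f9 (belast a x')); by rewrite lastI e.
have hxalt := alt_char hss' hp hx hl.
have [ha [hb _]] := egcm_ab eg hss'.
have hbound : (exists k, (2 <= k)%nat /\ (- M s s') * (- M s' s) = 4 * cos (PI / INR k) ^ 2
                 /\ ((size x').+1 < k)%nat) \/ 4 <= (- M s s') * (- M s' s).
  case: (pair_case eg hss') => [[k [hk hm]]|h]; last by right; lra.
  left; exists k; split=> //; split; first by rewrite -hm; ring.
  rewrite ltnNge; apply/negP => hkx.
  have [y hy] := alt_suffix s' s hkx.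
  have hrel : cox_relator M (flatten (nseq k [:: s; s'])).
    right; exists s, s', k; split=> //.
  have hbr := braid_words hrel.
  case: k hk hm hkx hy hrel hbr => [//|k'] hk hm hkx hy hrel hbr.
  have e1 : alt s s' k'.+1 = rcons (alt s' s k') s by [].
  rewrite e1 in hbr.
  rewrite hxalt hy in evx.
  have h2 : coxeq M (rcons (v ++ y ++ alt s' s k') s) w.
    rewrite !rcons_cat; apply: coxeq_trans _ evx.
    apply: cx_catl; apply: cx_catl; exact: hbr.
  have h3 : coxeq M (v ++ y ++ alt s' s k') (rcons w s).
    exact: coxeq_trans (coxeq_sym (cx_rcons2 M _ s)) (cx_rcons s h2).
  have := long _ h3; have := congr1 size hy; move: f1.
  rewrite !size_cat !size_alt /=; move=> *; lia.
rewrite (coxeq_sgw eg ew1) -(coxeq_sgw eg evx) sgw_cat hxalt sgw_alt_coef ?hd // sgw_lin.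
move=> l.
have [hp1 hp2] := coef_nonneg ha hb hbound.
apply: Rplus_le_le_0_compat; apply: Rmult_le_pos => //.
Qed.



Lemma legal_of_pos n (M : 'I_n -> 'I_n -> R) t lam :
  (forall t1 i t2, t = t1 ++ i :: t2 -> 0 < firesq M lam t1 i) -> legal_seq M lam t.
Proof.
elim: t lam => [//|i t IH] lam h /=; split.
  exact: (h [::] i t).
apply: IH => t1 j t2 e; have := h (i :: t1) j t2; rewrite e; by apply.
Qed.

Lemma red_factor n (M : 'I_n -> 'I_n -> R) a b c : reduced M (a ++ b ++ c) -> reduced M b.
Proof.
move=> h v hv; have := h _ (cx_cat3 a c hv); rewrite !size_cat; move=> *; lia.
Qed.

Lemma red_rev n (M : 'I_n -> 'I_n -> R) w : reduced M w -> reduced M (rev w).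
Proof.
move=> h v hv; have := h (rev v); rewrite !size_rev; apply.
have := cx_rev hv; by rewrite revK.
Qed.

Lemma red_len n (M : 'I_n -> 'I_n -> R) w : reduced M w -> cox_length M w (size w).
Proof. move=> h; split; [exists w; split=> //; exact: coxeq_refl | exact: h]. Qed.

Lemma main_claim (n : nat) (M : 'I_n -> 'I_n -> R) (J : {set 'I_n})
  (s : seq 'I_n) (lam : 'I_n -> R) :
  is_EGCM M -> reduced M (rev s) -> in_min_coset_reps M J (rev s) -> in_CJ J lam ->
  forall t1 i t3, s = t1 ++ i :: t3 -> 0 < firesq M lam t1 i.
Proof.
move=> eg red mcr [lJ lnJ] t1 i t3 es.
have hd : forall t, M t t = 2 by case: eg.
have reds : reduced M s by rewrite -(revK s); exact: red_rev.
have ht1 : cox_length M t1 (size t1).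
  apply: red_len; apply: (@red_factor _ _ [::] _ (i :: t3)); by rewrite -es.
have hlong : forall v, coxeq M v (rcons t1 i) -> (size t1 < size v)%nat.
  move=> v hv.
  have hr : reduced M (rcons t1 i).
    by apply: (@red_factor _ _ [::] _ t3); rewrite /= cat_rcons -es.
  have := hr v hv; by rewrite size_rcons.
have hb := mainT eg ht1 hlong.
rewrite duality.
case: (Rle_or_lt (\big[Rplus/R0]_(l < n) (lam l * sgw M t1 (ev i) l)) 0) => [hle|//].
exfalso.
have hlam : forall l, 0 <= lam l.
  move=> l; case: (boolP (l \in J)) => hl; [rewrite lJ //; lra | have := lnJ l hl; lra].
have hz := rsum_term0 (fun l => Rmult_le_pos _ _ (hlam l) (hb l)) hle.
have hbJ : forall l, l \notin J -> sgw M t1 (ev i) l = 0.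
  move=> l hl; case: (Rmult_integral _ _ (hz l)) => // h0; have := lnJ l hl; lra.
set x := i :: rev t1.
have hrs : rev s = rev t3 ++ x ++ [::] by rewrite es rev_cat rev_cons cat_rcons cats0.
have hredx : reduced M x by apply: (@red_factor _ _ (rev t3) _ [::]); rewrite -hrs.
have hx : cox_length M x (size t1).+1.
  have := red_len hredx; by rewrite /= size_rev.
have hbs : forall b, cox_length M (rev s) b -> b = size s.
  move=> b [[v' [hv' sv']] hmin]; apply/eqP; rewrite eqn_leq.
  have := hmin _ (coxeq_refl M (rev s)); rewrite size_rev => ->.
  have := red _ hv'; by rewrite size_rev sv'.
have hxJ : forall j, j \in J -> forall v, coxeq M v (rcons x j) -> ((size t1).+1 < size v)%nat.
  move=> j hj v hv; rewrite ltnNge; apply/negP => hle2.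
  have [a ha] := len_exists M (rcons (rev s) j).
  have [b hb'] := len_exists M (rev s).
  have hba := mcr j hj a b ha hb'.
  have eb := hbs b hb'.
  have : (a <= size (rev t3 ++ v))%nat.
    apply: (proj2 ha); rewrite hrs cats0 rcons_cat; exact: cx_catl.
  move: hba hle2; rewrite eb es !size_cat size_rev /=; move=> *; lia.
have hxpos : forall j, j \in J -> forall l, 0 <= sgw M x (ev j) l.
  move=> j hj; have H := mainT eg hx (hxJ j hj); exact H.
have hg : 0 <= sgw M x (sgw M t1 (ev i)) i.
  rewrite sgw_matrix; apply: rsum_ge0 => l.
  case: (boolP (l \in J)) => hl.
    apply: Rmult_le_pos; [exact: hb | exact: hxpos].
  rewrite hbJ //; lra.
move: hg; rewrite /x /= sgw_rev_cancel // sg_ev // /ev eqxx; lra.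
Qed.

Close Scope R_scope.

Theorem proposition5p2 (n : nat) (M : 'I_n -> 'I_n -> R) (J : {set 'I_n})
  (s : seq 'I_n) (lam : 'I_n -> R) :
  is_EGCM M ->
  parabolic_finite M J ->
  reduced M (rev s) ->
  in_min_coset_reps M J (rev s) ->
  in_CJ J lam ->
  forall q, 1 <= q <= size s -> legal_seq M lam (take q s).
Proof.
move=> eg _ red mcr hl q hq.
apply: legal_of_pos => t1 i t2 e.
apply: (@main_claim n M J s lam eg red mcr hl t1 i (t2 ++ drop q s)).
by rewrite -{1}(cat_take_drop q s) e -catA.
Qed.
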